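(* Let $r>0$ and $d_0>0$. There exists $s_0$ such that for all $s\ge s_0$, for every $\Gamma\in\mathcal{H}$ and all non-empty compact sets $K,K'\subseteq\mathbb{R}^2$ with $d_H(K,K')<d_0$: if $K\in\mathcal{LA}_s(\Gamma)$, then $K'\in\mathcal{LA}_r(\Gamma)$.
   Context: $d_H$ is the Hausdorff distance. $\mathcal{H}$ is the set of homothety types: non-empty compact subsets of $\mathbb{R}^2$ modulo the group generated by translations and homotheties of positive ratio. For $r>0$, $\Gamma\in\mathcal{H}$ and non-empty compact $K\subseteq\mathbb{R}^2$, $K$ is an $r$-large approximate of $\Gamma$, written $K\in\mathcal{LA}_r(\Gamma)$, if $\mathrm{diam}(K)>r$ and there is a set $\hat\Gamma\in\Gamma$ of diameter $1$ with $d_H(K/\mathrm{diam}(K),\hat\Gamma)<1/r$. *)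

(* Defs.v *)
(* The plane R^2 is modelled as R * R (product
   topology = Euclidean topology), with the Euclidean distance defined below. *)
From HB Require Import structures.
From mathcomp Require Import all_boot all_order all_algebra.
From mathcomp Require Import all_classical all_reals all_analysis.
Set Implicit Arguments. Unset Strict Implicit. Unset Printing Implicit Defensive.
Import Order.TTheory GRing.Theory Num.Theory numFieldNormedType.Exports.
Local Open Scope classical_set_scope.
Local Open Scope ring_scope.

Section Defs.
Variable R : realType.
Notation P2 := (R * R)%type.

Definition eucl (p q : P2) : R :=
  Num.sqrt ((p.1 - q.1) ^+ 2 + (p.2 - q.2) ^+ 2).

Definition diam (K : set P2) : R :=
  sup [set eucl p q | p in K & q in K].

Definition dist_to (p : P2) (B : set P2) : R :=
  inf [set eucl p q | q in B].

Definition hausdorff (A B : set P2) : R :=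
  Num.max (sup [set dist_to a B | a in A]) (sup [set dist_to b A | b in B]).

Definition scale_set (c : R) (K : set P2) : set P2 :=
  [set (c * p.1, c * p.2) | p in K].

(* H is obtained from G by an element of the group generated by translations
   and positive homotheties, i.e. a map x |-> l x + v with l > 0. *)
Definition homothetic (G H : set P2) : Prop :=
  exists (l : R) (v : P2), 0 < l /\
    H = [set (l * p.1 + v.1, l * p.2 + v.2) | p in G].

Definition LA (r : R) (G K : set P2) : Prop :=
  r < diam K /\
  exists Gh : set P2, homothetic G Gh /\ diam Gh = 1 /\
    hausdorff (scale_set (diam K)^-1 K) Gh < r^-1.

End Defs.

(* Main.v *)
From HB Require Import structures.
From mathcomp Require Import all_boot all_order all_algebra.
From mathcomp Require Import all_classical all_reals all_analysis.
From mathcomp Require Import ring lra.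
Require Import Defs.
Import Order.TTheory GRing.Theory Num.Theory numFieldNormedType.Exports.
Local Open Scope classical_set_scope.
Local Open Scope ring_scope.
Set Implicit Arguments. Unset Strict Implicit.
Section Helpers.
Variable R : realType.
Notation P2 := (R * R)%type.
Implicit Types p q x y : P2.

Lemma eucl_ge0 p q : 0 <= eucl p q.
Proof. exact: sqrtr_ge0. Qed.

Lemma eucl_diff x y p q (c : R) :
  x.1 - y.1 = c * (p.1 - q.1) -> x.2 - y.2 = c * (p.2 - q.2) ->
  eucl x y = `|c| * eucl p q.
Proof.
move=> h1 h2; rewrite /eucl h1 h2 !exprMn -mulrDr sqrtrM ?sqr_ge0 //.
by rewrite sqrtr_sqr.
Qed.

Lemma eucl_sym p q : eucl p q = eucl q p.
Proof. by rewrite (@eucl_diff p q q p (-1)) ?normrN ?normr1 ?mul1r //; ring. Qed.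

Lemma eucl_tri p q r : eucl p r <= eucl p q + eucl q r.
Proof.
rewrite /eucl.
set a := p.1 - q.1; set b := p.2 - q.2; set c := q.1 - r.1; set d := q.2 - r.2.
have -> : p.1 - r.1 = a + c by rewrite /a /c; ring.
have -> : p.2 - r.2 = b + d by rewrite /b /d; ring.
set X := Num.sqrt (a ^+ 2 + b ^+ 2); set Y := Num.sqrt (c ^+ 2 + d ^+ 2).
have X0 : 0 <= X := sqrtr_ge0 _.
have Y0 : 0 <= Y := sqrtr_ge0 _.
have XX : X ^+ 2 = a ^+ 2 + b ^+ 2 by rewrite sqr_sqrtr // addr_ge0 // sqr_ge0.
have YY : Y ^+ 2 = c ^+ 2 + d ^+ 2 by rewrite sqr_sqrtr // addr_ge0 // sqr_ge0.
have -> : X + Y = Num.sqrt ((X + Y) ^+ 2) by rewrite sqrtr_sqr ger0_norm // addr_ge0.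
rewrite ler_sqrt; last by rewrite sqr_ge0.
have XY0 : 0 <= X * Y by rewrite mulr_ge0.
have XY2 : (X * Y) ^+ 2 = (a ^+ 2 + b ^+ 2) * (c ^+ 2 + d ^+ 2) by rewrite exprMn XX YY.
have key : a * c + b * d <= X * Y.
  have h : (a * c + b * d) ^+ 2 <= (X * Y) ^+ 2.
    rewrite XY2. have := sqr_ge0 (a * d - b * c). nra.
  case: (lerP (a * c + b * d) 0) => hs; first by apply: le_trans hs XY0.
  rewrite -(ler_pXn2r (n:=2)) //; rewrite nnegrE ltW //.
nra.
Qed.

Definition bnd (A : set P2) (M : R) := forall p q, A p -> A q -> eucl p q <= M.
Definition close (A B : set P2) (e : R) := forall a, A a -> exists2 b, B b & eucl a b < e.

Lemma compact_bnd (K : set P2) : compact K -> exists M, bnd K M.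
Proof.
move=> cK.
have : compact (fst @` K).
  apply: continuous_compact => //.
  apply: continuous_subspaceT => p. exact: cvg_fst.
move=> /(@compact_bounded R R^o) [M1 [_ HM1]].
have : compact (snd @` K).
  apply: continuous_compact => //.
  apply: continuous_subspaceT => p. exact: cvg_snd.
move=> /(@compact_bounded R R^o) [M2 [_ HM2]].
exists (2 * (M1 + 1) + 2 * (M2 + 1)) => p q Kp Kq.
have h1 : forall z, K z -> `|z.1| <= M1 + 1.
  move=> z Kz; apply: (HM1 (M1+1)); [lra | by exists z].
have h2 : forall z, K z -> `|z.2| <= M2 + 1.
  move=> z Kz; apply: (HM2 (M2+1)); [lra | by exists z].
have e : eucl p q <= `|p.1 - q.1| + `|p.2 - q.2|.
  set a := p.1 - q.1; set b := p.2 - q.2.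
  rewrite /eucl -/a -/b -[X in _ <= X]ger0_norm ?addr_ge0 // -sqrtr_sqr ler_sqrt ?sqr_ge0 //.
  rewrite -(real_normK (num_real a)) -(real_normK (num_real b)).
  have := normr_ge0 a; have := normr_ge0 b.
  set u := `|a|; set v := `|b|. move=> hv hu. 
  rewrite sqrrD. have := mulr_ge0 hu hv. lra.
apply: (le_trans e).
have := ler_normB p.1 q.1; have := ler_normB p.2 q.2.
have := h1 _ Kp; have := h1 _ Kq; have := h2 _ Kp; have := h2 _ Kq. lra.
Qed.

Lemma bnd_eucl_set (A : set P2) M :
  bnd A M -> has_ubound [set eucl p q | p in A & q in A].
Proof. by move=> hM; exists M => _ [p Ap [q Aq <-]]; apply: hM. Qed.

Lemma le_diam (A : set P2) M p q : bnd A M -> A p -> A q -> eucl p q <= diam A.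
Proof.
move=> hM Ap Aq; have := ub_le_sup (bnd_eucl_set hM); apply.
by exists p => //; exists q.
Qed.

Lemma diam_le (A : set P2) (z : R) : A !=set0 ->
  (forall p q, A p -> A q -> eucl p q <= z) -> diam A <= z.
Proof.
move=> [a Aa] h; apply: ge_sup; first by exists (eucl a a); exists a => //; exists a.
by move=> _ [p Ap [q Aq <-]]; apply: h.
Qed.

Lemma diam_bnd (A : set P2) : diam A != 0 -> exists M, bnd A M.
Proof.
move=> hd.
have hs : has_sup [set eucl p q | p in A & q in A].
  apply/not_notP => hn; move: hd; rewrite /diam sup_out //; by rewrite eqxx.
case: hs => _ [M HM]; exists M => p q Ap Aq; apply: HM.
by exists p => //; exists q.
Qed.

Lemma dist_to_le p (B : set P2) b : B b -> dist_to p B <= eucl p b.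
Proof.
move=> Bb; apply: ge_inf; last by exists b.
by exists 0 => _ [q _ <-]; apply: eucl_ge0.
Qed.

Lemma dist_to_lt p (B : set P2) e : B !=set0 -> dist_to p B < e ->
  exists2 b, B b & eucl p b < e.
Proof.
move=> [b0 Bb0] /inf_lt [| _ [b Bb <-] h]; first by exists (eucl p b0); exists b0.
by exists b.
Qed.

Lemma haus_le (A B : set P2) e : A !=set0 -> B !=set0 ->
  close A B e -> close B A e -> hausdorff A B <= e.
Proof.
move=> [a0 Aa0] [b0 Bb0] hAB hBA; rewrite /hausdorff ge_max; apply/andP; split.
  apply: ge_sup; first by exists (dist_to a0 B); exists a0.
  move=> _ [a Aa <-]; have [b Bb h] := hAB a Aa.
  exact: le_trans (dist_to_le _ Bb) (ltW h).
apply: ge_sup; first by exists (dist_to b0 A); exists b0.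
move=> _ [b Bb <-]; have [a Aa h] := hBA b Bb.
exact: le_trans (dist_to_le _ Aa) (ltW h).
Qed.

Lemma haus_close1 (A B : set P2) M e : A !=set0 -> B !=set0 -> bnd A M ->
  hausdorff A B < e -> close A B e.
Proof.
move=> [a0 Aa0] [b0 Bb0] hM hH a Aa; apply: dist_to_lt; first by exists b0.
have hub : has_ubound [set dist_to x B | x in A].
  exists (M + eucl a0 b0) => _ [x Ax <-].
  apply: le_trans (dist_to_le _ Bb0) _.
  apply: le_trans (eucl_tri x a0 b0) _; rewrite lerD2r; exact: hM.
apply: le_lt_trans hH; rewrite /hausdorff le_max; apply/orP; left.
by apply: (ub_le_sup hub); exists a.
Qed.

Lemma haus_sym (A B : set P2) : hausdorff A B = hausdorff B A.
Proof. by rewrite /hausdorff maxC. Qed.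

Lemma close_diam (A B : set P2) M e : A !=set0 -> bnd B M ->
  close A B e -> diam A <= diam B + 2 * e.
Proof.
move=> A0 hM hAB; apply: diam_le => // p q Ap Aq.
have [p' Bp' h1] := hAB p Ap; have [q' Bq' h2] := hAB q Aq.
have h3 := le_diam hM Bp' Bq'.
have t1 := eucl_tri p p' q; have t2 := eucl_tri p' q' q.
rewrite (eucl_sym q' q) in t2. lra.
Qed.
End Helpers.

Theorem mainTheorem5 (R : realType) (r d0 : R) :
  0 < r -> 0 < d0 ->
  exists s0 : R, forall s : R, s0 <= s ->
    forall G K K' : set (R * R)%type,
      compact G -> G !=set0 ->
      compact K -> K !=set0 ->
      compact K' -> K' !=set0 ->
      hausdorff K K' < d0 ->
      LA s G K -> LA r G K'.
Proof.
move=> r0 d00; exists (r * (3 * d0 + 1) + r + 2 * d0).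
move=> s hs G K K' cG G0 cK K0 cK' K'0 hKK' [sD [Gh [[l [v [l0 ->]]] [dGh hH]]]].
have rd0 : 0 < r * (3 * d0 + 1) by rewrite mulr_gt0 //; lra.
have s0 : 0 < s by lra.
set D := diam K in sD hH *.
set D' := diam K'.
have D0 : 0 < D by lra.
have [MK bK] := compact_bnd cK.
have [MK' bK'] := compact_bnd cK'.
have [MG bG] : exists M, bnd [set (l * p.1 + v.1, l * p.2 + v.2) | p in G] M.
  by apply: diam_bnd; rewrite dGh oner_neq0.
have Gh0 : [set (l * p.1 + v.1, l * p.2 + v.2) | p in G] !=set0.
  by case: G0 => g Gg; exists (l * g.1 + v.1, l * g.2 + v.2); exists g.
have KD0 : scale_set D^-1 K !=set0.
  by case: K0 => k Kk; exists (D^-1 * k.1, D^-1 * k.2); exists k.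
have bKD : bnd (scale_set D^-1 K) (`|D^-1| * MK).
  move=> _ _ [p Kp <-] [q Kq <-].
  rewrite (@eucl_diff _ _ _ p q D^-1) /=; try ring.
  by rewrite ler_wpM2l // bK.
have cKK' := haus_close1 K0 K'0 bK hKK'.
have cK'K : close K' K d0 by apply: haus_close1 K'0 K0 bK' _; rewrite haus_sym.
have cKG := haus_close1 KD0 Gh0 bKD hH.
have cGK : close [set (l * p.1 + v.1, l * p.2 + v.2) | p in G] (scale_set D^-1 K) s^-1.
  by apply: haus_close1 Gh0 KD0 bG _; rewrite haus_sym.
have hD1 : D <= D' + 2 * d0 := close_diam K0 bK' cKK'.
have hD2 : D' <= D + 2 * d0 := close_diam K'0 bK cK'K.
have D'r : r < D' by lra.
have D'0 : 0 < D' by lra.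
case: K'0 => a' Ka'.
pose w : (R * R)%type := (D'^-1 * a'.1 - D^-1 * a'.1, D'^-1 * a'.2 - D^-1 * a'.2).
pose E := 3 * d0 * D^-1 + s^-1.
have key : forall p' p q, K' p' -> G q -> eucl p' p < d0 ->
    eucl (D^-1 * p.1, D^-1 * p.2) (l * q.1 + v.1, l * q.2 + v.2) < s^-1 ->
    eucl (D'^-1 * p'.1, D'^-1 * p'.2) (l * q.1 + (v.1 + w.1), l * q.2 + (v.2 + w.2)) < E.
  move=> p' p q Kp' Gq h1 h2.
  pose y1 : (R * R)%type := (D^-1 * p'.1 + w.1, D^-1 * p'.2 + w.2).
  pose y2 : (R * R)%type := (D^-1 * p.1 + w.1, D^-1 * p.2 + w.2).
  have t1 := eucl_tri (D'^-1 * p'.1, D'^-1 * p'.2) y1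
     (l * q.1 + (v.1 + w.1), l * q.2 + (v.2 + w.2)).
  have t2 := eucl_tri y1 y2 (l * q.1 + (v.1 + w.1), l * q.2 + (v.2 + w.2)).
  have e1 : eucl (D'^-1 * p'.1, D'^-1 * p'.2) y1 = `|D'^-1 - D^-1| * eucl p' a'.
    by apply: eucl_diff => /=; ring.
  have e2 : eucl y1 y2 = `|D^-1| * eucl p' p.
    by apply: eucl_diff => /=; ring.
  have e3 : eucl y2 (l * q.1 + (v.1 + w.1), l * q.2 + (v.2 + w.2)) =
      `|1| * eucl (D^-1 * p.1, D^-1 * p.2) (l * q.1 + v.1, l * q.2 + v.2).
    by apply: eucl_diff => /=; ring.
  rewrite normr1 mul1r in e3.
  have Di0 : 0 < D^-1 by rewrite invr_gt0.
  rewrite (gtr0_norm Di0) in e2.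
  have b2 : D^-1 * eucl p' p < D^-1 * d0 by rewrite ltr_pM2l.
  have b1 : `|D'^-1 - D^-1| * eucl p' a' <= `|D'^-1 - D^-1| * D'.
    by rewrite ler_wpM2l // (le_diam bK').
  have b1' : `|D'^-1 - D^-1| * D' <= 2 * d0 * D^-1.
    rewrite -[X in _ * X]gtr0_norm // -normrM.
    have -> : (D'^-1 - D^-1) * D' = (D - D') * D^-1.
      by field; apply/andP; split; rewrite gt_eqF.
    rewrite normrM (gtr0_norm Di0) ler_wpM2r //; first exact: ltW.
    rewrite ler_norml; apply/andP; split; lra.
  rewrite /E; lra.
have hE : E < r^-1.
  have h1 : 3 * d0 * D^-1 < 3 * d0 * s^-1.
    by rewrite ltr_pM2l ?ltf_pV2 ?posrE //; lra.
  have h2 : 3 * d0 * s^-1 + s^-1 = (3 * d0 + 1) / s by ring.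
  have h3 : (3 * d0 + 1) / s <= r^-1.
    rewrite ler_pdivrMr //.
    have h4 : r^-1 * (r * (3 * d0 + 1)) <= r^-1 * s.
      by rewrite ler_wpM2l ?invr_ge0 ?ltW //; lra.
    by rewrite mulKf ?gt_eqF // in h4.
  rewrite /E; lra.
split => //.
exists [set (l * p.1 + (v.1 + w.1), l * p.2 + (v.2 + w.2)) | p in G].
split; first by exists l, (v.1 + w.1, v.2 + w.2).
split.
  rewrite -dGh /diam; congr sup; apply/seteqP; split.
    move=> _ [_ [p Gp <-] [_ [q Gq <-] <-]].
    exists (l * p.1 + v.1, l * p.2 + v.2); first by exists p.
    exists (l * q.1 + v.1, l * q.2 + v.2); first by exists q.
    by rewrite [RHS](@eucl_diff _ _ _ (l * p.1 + v.1, l * p.2 + v.2) (l * q.1 + v.1, l * q.2 + v.2) 1) ?normr1 ?mul1r //= ; ring.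
  move=> _ [_ [p Gp <-] [_ [q Gq <-] <-]].
  exists (l * p.1 + (v.1 + w.1), l * p.2 + (v.2 + w.2)); first by exists p.
  exists (l * q.1 + (v.1 + w.1), l * q.2 + (v.2 + w.2)); first by exists q.
  by rewrite [LHS](@eucl_diff _ _ _ (l * p.1 + v.1, l * p.2 + v.2) (l * q.1 + v.1, l * q.2 + v.2) 1) ?normr1 ?mul1r //= ; ring.
apply: le_lt_trans hE; apply: haus_le.
- by exists (D'^-1 * a'.1, D'^-1 * a'.2); exists a'.
- by case: G0 => g Gg; exists (l * g.1 + (v.1 + w.1), l * g.2 + (v.2 + w.2)); exists g.
- move=> _ [p' Kp' <-].
  have [p Kp h1] := cK'K p' Kp'.
  have [_ [q Gq <-] h2] := cKG (D^-1 * p.1, D^-1 * p.2) (ex_intro2 _ _ p Kp erefl).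
  exists (l * q.1 + (v.1 + w.1), l * q.2 + (v.2 + w.2)); first by exists q.
  exact: (key p' p q).
- move=> _ [q Gq <-].
  have [_ [p Kp <-] h2] := cGK (l * q.1 + v.1, l * q.2 + v.2) (ex_intro2 _ _ q Gq erefl).
  have [p' Kp' h1] := cKK' p Kp.
  exists (D'^-1 * p'.1, D'^-1 * p'.2); first by exists p'.
  rewrite eucl_sym; apply: (key p' p q) => //; by rewrite eucl_sym.
Qed.
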